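(* Let $X=[-1,1]\times[0,e^{-2\pi}]$, $X_1=\{(x,y)\in X:y=0,\ x>0\}\cup\{(x,y)\in X:y>0,\ x>y\sin(-\log y)\}$, $X_2=\{(x,y)\in X:y=0,\ x<0\}\cup\{(x,y)\in X:y>0,\ x<y\sin(-\log y)\}$, $f_1(x,y)=e^{-\pi}(x,y)$ and $f_2(x,y)=\left(-\tfrac12+\tfrac12(x+\tfrac12),\ \tfrac12 y\right)$. Let $f:X\to X$ be any map with $f|_{X_1}=f_1$ and $f|_{X_2}=f_2$. Then for every $n\ge2$ there is an atom of generation $n$ of $f$ which is disconnected and has infinitely many connected components.
   Context: For $A\subset X$ let $F_i(A):=\overline{f(A\cap X_i)}$ ($i=1,2$). An atom of generation $n\ge1$ is a set of the form $F_{i_n}\circ\cdots\circ F_{i_1}(X)$ with $i_1,\dots,i_n\in\{1,2\}$. *)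

(* Defs.v *)
From HB Require Import structures.
From mathcomp Require Import all_boot all_order all_algebra.
From mathcomp Require Import all_classical all_reals all_analysis.
Set Implicit Arguments. Unset Strict Implicit. Unset Printing Implicit Defensive.
Import Order.TTheory GRing.Theory Num.Theory.
Local Open Scope classical_set_scope.
Local Open Scope ring_scope.

Section Defs.
Variable R : realType.
Implicit Types p : R * R.

Definition Xset : set (R * R) :=
  [set p | -1 <= p.1 <= 1 /\ 0 <= p.2 <= expR (- (2 * pi))].

Definition X1set : set (R * R) :=
  [set p | Xset p /\ ((p.2 = 0 /\ 0 < p.1) \/
                      (0 < p.2 /\ p.2 * sin (- ln p.2) < p.1))].

Definition X2set : set (R * R) :=
  [set p | Xset p /\ ((p.2 = 0 /\ p.1 < 0) \/
                      (0 < p.2 /\ p.1 < p.2 * sin (- ln p.2)))].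

Definition f1 p : R * R := (expR (- pi) * p.1, expR (- pi) * p.2).
Definition f2 p : R * R :=
  (- (1/2) + (1/2) * (p.1 + 1/2), (1/2) * p.2).

(* index i : bool, with true standing for 1 and false for 2 *)
Definition Xi (i : bool) : set (R * R) := if i then X1set else X2set.

Definition Fop (f : R * R -> R * R) (i : bool) (A : set (R * R)) : set (R * R) :=
  @closure (R^o * R^o)%type (f @` (A `&` Xi i)).

(* atom F_{i_n} o ... o F_{i_1}(X) for s = [:: i_1; ...; i_n] *)
Definition atom (f : R * R -> R * R) (s : seq bool) : set (R * R) :=
  foldl (fun A i => Fop f i A) Xset s.

Definition components (A : set (R * R)) : set (set (R * R)) :=
  [set @connected_component (R^o * R^o)%type A x | x in A].
End Defs.

(* Main.v *)
Require Import Defs.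
From HB Require Import structures.
From mathcomp Require Import all_boot all_order all_algebra.
From mathcomp Require Import all_classical all_reals all_analysis.
From mathcomp Require Import lra ring.
Import Order.TTheory GRing.Theory Num.Theory.
Local Open Scope classical_set_scope.
Local Open Scope ring_scope.

Lemma closure_box {R : realType} (S : set (R * R)) (p : R * R) (a b c : R) :
  @closure (R^o * R^o)%type S p -> a < p.2 < b -> p.1 < c ->
  exists q, S q /\ a < q.2 < b /\ q.1 < c.
Proof.
move=> cl /andP[ha hb] hc.
have: nbhs (p : (R^o * R^o)%type) [set q : R^o * R^o | a < q.2 < b /\ q.1 < c].
  apply/nbhs_ballP.
  exists (Num.min (Num.min (p.2 - a) (b - p.2)) (c - p.1)).
    by rewrite /= !lt_min !subr_gt0 ha hb hc.
  case=> x y [/= bx by_].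
  move: bx by_; rewrite /ball /= !lt_min => /andP[/andP[h1 h2] h3] /andP[/andP[h4 h5] h6].
  move: h3 h4 h5; rewrite !ltr_distlC => /andP[h3 h3'] /andP[h4 h4'] /andP[h5 h5'].
  split; first (apply/andP; split); lra.
move=> /cl [q [Sq Bq]]; by exists q.
Qed.

Lemma sep_conn {R : realType} (D C : set (R * R)) (a b m : R) q1 q2 :
  (forall p, D p -> ~ (a < p.2 < b)) -> a < m < b ->
  @connected (R^o * R^o)%type C -> C `<=` D -> C q1 -> C q2 -> q2.2 < m < q1.2 -> False.
Proof.
move=> av hm cC CD C1 C2 hq.
have := @connected_continuous_connected (R^o * R^o)%type R^o C snd cC.
move=> H.
have cs : @connected R^o [set x.2 | x in C].
  apply: H.
  apply: continuous_subspaceT => p.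
  exact: cvg_snd.
have /connected_intervalP iv := cs.
have [p Cp pm] : [set x.2 | x in C] m.
  apply: (iv q2.2 q1.2); [by exists q2|by exists q1|].
  by case/andP: hq => h1 h2; rewrite (ltW h1) (ltW h2).
by apply: (av p (CD _ Cp)); rewrite pm.
Qed.

Lemma sin_periodk (R : realType) (x : R) k : sin (x + pi *+ 2 *+ k) = sin x.
Proof.
elim: k => [|k IH]; first by rewrite mulr0n addr0.
by rewrite mulrSr addrA sinD2pi.
Qed.

Lemma pik (R : realType) k : (pi : R) *+ 2 *+ k = 2 * k%:R * pi.
Proof. by rewrite -[_ *+ k]mulr_natl -[pi *+ 2]mulr_natl mulrA (mulrC k%:R). Qed.

Lemma sin_pos_k (R : realType) k (th : R) :
  (2 * k%:R) * pi < th < (2 * k%:R + 1) * pi -> 0 < sin th.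
Proof.
move=> /andP[h1 h2].
have -> : th = (th - 2 * k%:R * pi) + pi *+ 2 *+ k by rewrite pik subrK.
rewrite sin_periodk; apply: sin_gt0_pi.
apply/andP; split; first by rewrite subr_gt0.
move: h2; rewrite mulrDl mul1r; lra.
Qed.

Lemma sin_neg_k (R : realType) k (th : R) :
  (2 * k%:R + 1) * pi < th < (2 * k%:R + 2) * pi -> sin th < 0.
Proof.
move=> /andP[h1 h2].
have -> : th = (th - pi) + pi by rewrite subrK.
rewrite sinDpi oppr_lt0. apply: (@sin_pos_k _ k).
move: h1 h2; rewrite !mulrDl mul1r; move=> h1 h2.
apply/andP; split; lra.
Qed.

Lemma ln_range (R : realType) (u v y : R) : expR (- u) < y < expR (- v) -> v < - ln y < u.
Proof.
move=> /andP[h1 h2].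
have y0 : 0 < y by apply: lt_trans h1; exact: expR_gt0.
have ey : expR (ln y) = y by apply: lnK.
rewrite -ey !ltr_expR in h1 h2.
apply/andP; split; lra.
Qed.

Definition avoid {R : realType} (A : set (R * R)) (a b : R) :=
  forall p, A p -> ~ (a < p.2 < b).

Lemma avoid_closure {R : realType} (S : set (R * R)) a b :
  avoid S a b -> avoid (@closure (R^o * R^o)%type S) a b.
Proof.
move=> av p cl h.
have [q [Sq [hq _]]] := @closure_box R S p a b (p.1 + 1) cl h (ltr_pwDr ltr01 (lexx p.1)).
exact: av Sq hq.
Qed.

Lemma avoid_F2 (R : realType) (f : R * R -> R * R)
  (f_X2 : forall p, @X2set R p -> f p = f2 p) (A : set (R * R)) a b :
  avoid (A `&` @X2set R) a b -> avoid (Fop f false A) (a * (1/2)) (b * (1/2)).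
Proof.
move=> av; rewrite /Fop /=; apply: avoid_closure.
move=> _ [r [Ar X2r] <-]; rewrite f_X2 //= => /andP[h1 h2].
apply: (av r (conj Ar X2r)); apply/andP; split; lra.
Qed.

Definition aK (R : realType) (K : nat) : R := expR (- ((2 * K%:R + 2) * pi)).
Definition bK (R : realType) (K : nat) : R := expR (- ((2 * K%:R + 1) * pi)).
Definition mK (R : realType) (K : nat) : R := expR (- ((2 * K%:R + 3/2) * pi)).
Definition yK (R : realType) (K : nat) : R := expR (- ((2 * K%:R + 1/2) * pi)).

Lemma strip_sin {R : realType} {K : nat} {y : R} : aK R K < y < bK R K -> sin (- ln y) < 0.
Proof. by move=> h; apply: (@sin_neg_k _ K); apply: ln_range. Qed.

Lemma aK_gt0 (R : realType) K : 0 < aK R K.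
Proof. exact: expR_gt0. Qed.

Lemma A1_avoid (R : realType) (f : R * R -> R * R)
  (f_X1 : forall p, @X1set R p -> f p = f1 p) K :
  avoid (Fop f true (@Xset R) `&` @X2set R) (aK R K) (bK R K).
Proof.
move=> p [cl X2p] h.
have p2pos : 0 < p.2 by case/andP: h => h1 _; apply: (lt_trans _ h1); apply: aK_gt0.
have sn := strip_sin h.
case: X2p => _ [[p20 _]|[_ hp]]; first by move: p2pos; rewrite p20 ltxx.
have p1neg : p.1 < 0 by apply: (lt_trans hp); rewrite pmulr_rlt0.
have [q [[r [Xr X1r] <-] [hq hq1]]] := @closure_box R _ p _ _ 0 cl h p1neg.
move: hq hq1; rewrite f_X1 //= => hq hq1.
have e0 : 0 < expR (- pi) :> R := expR_gt0 _.
case: X1r => _ [[r20 _]|[r2pos hr]].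
  by move: hq; rewrite r20 mulr0 => /andP[h1 _]; move: h1; rewrite ltNge ltW // aK_gt0.
have r1neg : r.1 < 0 by move: hq1; rewrite pmulr_rlt0.
have snr : sin (- ln r.2) < 0.
  have : r.2 * sin (- ln r.2) < 0 by apply: (lt_trans hr r1neg).
  by rewrite pmulr_rlt0.
have := strip_sin hq.
rewrite lnM ?posrE // expRK.
have -> : - (- pi + ln r.2) = - ln r.2 + pi by ring.
rewrite sinDpi oppr_lt0 => h'.
by move: snr; rewrite ltNge ltW.
Qed.

Lemma aux_quarter (R : realType) (z : R) : 0 < z -> z * 5 <= 1 -> z < 1/4.
Proof. move=> h h'. lra. Qed.

Lemma natS2 (R : realType) k : (k.+2)%:R = k%:R + 2 :> R.
Proof. by rewrite -addn2 natrD. Qed.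

Lemma natS1 (R : realType) k : (k.+1)%:R = k%:R + 1 :> R.
Proof. by rewrite -addn1 natrD. Qed.

Lemma e2pi_lt (R : realType) : expR (- (2 * pi)) < 1/4 :> R.
Proof.
have h1 := @expR_ge1Dx R (2 * pi).
have h2 := @pi_ge2 R.
have h3 : expR (- (2 * pi)) * expR (2 * pi) = 1 :> R by rewrite -expRD addNr expR0.
have h4 : 0 < expR (- (2 * pi)) :> R := expR_gt0 _.
have E5 : 5 <= expR (2 * pi) :> R by lra.
have := ler_wpM2l (ltW h4) E5.
rewrite h3.
exact: aux_quarter.
Qed.

Lemma yK_le (R : realType) k : yK R k.+2 <= expR (- (2 * pi)).
Proof.
rewrite /yK ler_expR lerN2 (natS2 R k) ler_pM2r ?pi_gt0 //.
have k0 : (0:R) <= k%:R := ler0n _ _.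
lra.
Qed.

Lemma pt_X2 (R : realType) k : @X2set R (0, yK R k.+2).
Proof.
split.
  split; first by rewrite /=; apply/andP; split; lra.
  by rewrite /= (ltW (expR_gt0 _)) yK_le.
right; split; first exact: expR_gt0.
rewrite /= pmulr_rgt0 ?expR_gt0 // /yK expRK opprK.
apply: (@sin_pos_k _ k.+2); apply/andP; split; rewrite ltr_pM2r ?pi_gt0 //; lra.
Qed.

Lemma mulBpi (R : realType) (c : R) : c * pi - pi = (c - 1) * pi.
Proof. by rewrite mulrBl mul1r. Qed.

Lemma pt_A1 (R : realType) (f : R * R -> R * R)
  (f_X1 : forall p, @X1set R p -> f p = f1 p) k :
  Fop f true (@Xset R) (0, yK R k.+2).
Proof.
apply: subset_closure.
set u : R := (2 * (k.+2)%:R + 1/2) * pi.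
have X1r : @X1set R (0, expR (- (u - pi))).
  split.
    split; first by rewrite /=; apply/andP; split; lra.
    rewrite /= (ltW (expR_gt0 _)) ler_expR lerN2 /u (natS2 R k).
    rewrite mulBpi ler_pM2r ?pi_gt0 //.
    have k0 : (0:R) <= k%:R := ler0n _ _.
    lra.
  right; split; first exact: expR_gt0.
  rewrite /= pmulr_rlt0 ?expR_gt0 // expRK opprK.
  apply: (@sin_neg_k _ k.+1).
  rewrite /u (natS2 R k) (natS1 R k) mulBpi !ltr_pM2r ?pi_gt0 //.
  have k0 : (0:R) <= k%:R := ler0n _ _.
  apply/andP; split; lra.
exists (0, expR (- (u - pi))); first by split=> //; case: X1r.
rewrite f_X1 // /f1 /= mulr0 -expRD /yK.
congr (_, expR _); rewrite /u; ring.
Qed.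

Lemma foldl_nseqS {T U : Type} (g : T -> U -> T) (a : T) (x : U) n :
  foldl g a (nseq n.+1 x) = g (foldl g a (nseq n x)) x.
Proof. by elim: n a => [|n IH] a //=; rewrite -IH. Qed.

Definition Dset {R : realType} (f : R * R -> R * R) (j : nat) : set (R * R) :=
  foldl (fun A i => Fop f i A) (Fop f true (@Xset R)) (nseq j.+1 false).

Lemma chain_avoid (R : realType) (f : R * R -> R * R)
  (f_X1 : forall p, @X1set R p -> f p = f1 p)
  (f_X2 : forall p, @X2set R p -> f p = f2 p) j k :
  avoid (Dset f j) (aK R k.+2 * (1/2)^+j.+1) (bK R k.+2 * (1/2)^+j.+1).
Proof.
elim: j => [|j IH].
  rewrite expr1; apply: avoid_F2 => //; exact: A1_avoid.
rewrite /Dset foldl_nseqS exprSr (mulrA (aK R k.+2)) (mulrA (bK R k.+2)); apply: avoid_F2 => // p [Dp _].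
exact: IH.
Qed.

Lemma chain_pts (R : realType) (f : R * R -> R * R)
  (fX : forall p, @Xset R p -> @Xset R (f p))
  (f_X1 : forall p, @X1set R p -> f p = f1 p)
  (f_X2 : forall p, @X2set R p -> f p = f2 p) j k :
  exists q, Dset f j q /\ @Xset R q /\ q.1 <= -(1/4) /\ q.2 = yK R k.+2 * (1/2)^+j.+1.
Proof.
elim: j => [|j [q [Dq [Xq [q1 q2]]]]].
  have X2p := pt_X2 R k.
  exists (f (0, yK R k.+2)); split.
    apply: subset_closure; exists (0, yK R k.+2) => //; split => //.
    exact: pt_A1.
  split; first by apply: fX; case: X2p.
  rewrite f_X2 // /f2 /= expr1; split; first lra.
  by rewrite mulrC.
have q2pos : 0 < q.2 by rewrite q2 mulr_gt0 ?exprn_gt0 ?expR_gt0.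
have X2q : @X2set R q.
  split => //; right; split => //.
  have hq : q.2 <= expR (- (2 * pi)) by case: Xq => _ /andP[].
  have := e2pi_lt R.
  have := ler_wpM2l (ltW q2pos) (sin_geN1 (- ln q.2)).
  move=> h1 h2.
  have h3 : q.2 * -1 <= q.2 * sin (- ln q.2) :> R := h1.
  lra.
exists (f q); split.
  rewrite /Dset foldl_nseqS; apply: subset_closure; exists q => //.
split; first exact: fX.
rewrite f_X2 // /f2 /=; split; first lra.
by rewrite q2 [in RHS]exprSr mulrC -mulrA.
Qed.

Lemma expcmp (R : realType) (c1 c2 : R) : c1 < c2 -> expR (- (c2 * pi)) < expR (- (c1 * pi)).
Proof. by move=> h; rewrite ltr_expR ltrN2 ltr_pM2r ?pi_gt0. Qed.

Theorem proposition7 (R : realType) (f : R * R -> R * R)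
  (fX : forall p, @Xset R p -> @Xset R (f p))
  (f_X1 : forall p, @X1set R p -> f p = f1 p)
  (f_X2 : forall p, @X2set R p -> f p = f2 p) :
  forall n : nat, (2 <= n)%N ->
    exists s : seq bool, size s = n /\
      ~ @connected (R^o * R^o)%type (atom f s) /\ ~ finite_set (components (atom f s)).
Proof.
move=> n hn.
exists (true :: nseq n.-2.+1 false).
split; first by rewrite /= size_nseq; case: n hn => [|[|n]].
set j := n.-2.
change (atom f (true :: nseq j.+1 false)) with (Dset f j).
have [Q HQ] := choice (fun k => @chain_pts R f fX f_X1 f_X2 j k).
set w : R := (1/2)^+j.+1.
have w0 : 0 < w by rewrite exprn_gt0.
have sep : forall k k', (k < k')%N -> forall C, @connected (R^o * R^o)%type C ->
    C `<=` Dset f j -> C (Q k) -> C (Q k') -> False.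
  move=> k k' kk' C cC CD Ck Ck'.
  have [_ [_ [_ e1]]] := HQ k.
  have [_ [_ [_ e2]]] := HQ k'.
  have hk : (k.+1)%:R <= k'%:R :> R by rewrite ler_nat.
  rewrite (natS1 R k) in hk.
  apply: (@sep_conn R (Dset f j) C _ _ (mK R k.+2 * w) (Q k) (Q k')
           (@chain_avoid R f f_X1 f_X2 j k) _ cC CD Ck Ck').
    rewrite !ltr_pM2r // /aK /bK /mK; apply/andP; split; apply: expcmp; lra.
  rewrite e1 e2 !ltr_pM2r // /yK /mK; apply/andP; split; apply: expcmp;
    rewrite (natS2 R k) ?(natS2 R k'); lra.
split.
  move=> cD.
  have [D0 _] := HQ 0%N.
  have [D1 _] := HQ 1%N.
  exact: (sep 0%N 1%N erefl _ cD (@subset_refl _ _) D0 D1).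
move=> fin.
set g := fun k => @connected_component (R^o * R^o)%type (Dset f j) (Q k).
have ginj : injective g.
  move=> k k' e.
  have gen : forall a b, (a < b)%N -> g a = g b -> False.
    move=> a b ab eab.
    have [Db _] := HQ b.
    have := @connected_component_refl (R^o * R^o)%type _ _ Db.
    rewrite -/(g b) -eab => -[C [Ca CD cC] Cb].
    exact: (sep a b ab C cC CD Ca Cb).
  case: (ltngtP k k') => // h; first by case: (gen _ _ h e).
  by case: (gen _ _ h (esym e)).
apply: infinite_nat.
apply: (@sub_finite_set _ _ (g @^-1` components (Dset f j))).
  move=> k _; exists (Q k) => //; by case: (HQ k).
apply: finite_preimage => //.
by move=> x y _ _; apply: ginj.
Qed.
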